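(* Let $a,b\in(\frac1{10},10)$, $A=\begin{pmatrix}a&0\\0&b\end{pmatrix}$, and for integers $1\le k\le k'\le2k$ let $u_1=\cos(kx)e^{-k\sqrt a\,t}$, $u_2=\cos(k'y)e^{-k'\sqrt b\,t}$ (solutions of $\ddot u+\operatorname{div}(A\nabla u)=0$). There exist universal constants $D>0$ and $M$ such that for every $0<\varepsilon<D$ and all such $k,k'$ with $\varepsilon^{-1/4}\le k,k'\le\varepsilon^{-1/3}$: (i) there exist a $C^2$ function $u$ and a $C^1$ real $2\times 2$ matrix function $\tilde A$ in the regularity class $R(20,10)$ with $\ddot u+\operatorname{div}(\tilde A\nabla u)=0$ on $\mathbb{T}^2\times\mathbb{R}$, $u=u_1$ and $\tilde A=A$ for $t\le0$, $u=u_1+\varepsilon u_2$ and $\tilde A=A$ for $t\ge\varepsilon^{1/3}$; and for $t\in[0,\varepsilon^{1/3}]$, $u=f(t)\cos(kx)+g(t)\cos(k'y)$ with $f,g\in C^2$, $|f^{(\alpha)}(t)|\le Mk^\alpha e^{-k\sqrt a\,t}$ and $|g^{(\alpha)}(t)|\le M(k')^\alpha\varepsilon^{(3-\alpha)/3}e^{-k'\sqrt b\,t}$ for $0\le\alpha\le2$; (ii) similarly there exist such $u,\tilde A$ (same regularity class, same time interval $[0,\varepsilon^{1/3}]$) with $u=\varepsilon u_1+u_2$ for $t\le0$ and $u=u_2$ for $t\ge\varepsilon^{1/3}$, $\tilde A=A$ outside $[0,\varepsilon^{1/3}]$, and for $t\in[0,\varepsilon^{1/3}]$, $u=f(t)\cos(kx)+g(t)\cos(k'y)$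 with $f,g\in C^2$, $|f^{(\alpha)}(t)|\le Mk^\alpha\varepsilon^{(3-\alpha)/3}e^{-k\sqrt a\,t}$ and $|g^{(\alpha)}(t)|\le M(k')^\alpha e^{-k'\sqrt b\,t}$ for $0\le\alpha\le2$.
   Context: $\mathbb{T}^2=(\mathbb{R}/2\pi\mathbb{Z})^2$ with coordinates $(x,y)$; $t$ the third coordinate. $\ddot u+\operatorname{div}(A\nabla u)$ means $\partial_t^2u+\sum_{i,j\in\{x,y\}}\partial_i(A_{ij}\partial_ju)$. Regularity class $R(\Lambda,C)$: $\Lambda^{-1}|\xi|^2\le\xi^TA\xi\le\Lambda|\xi|^2$ for all $\xi\in\mathbb{R}^2$ at every point, and the entries of $A$ are $C^1$ with all first partial derivatives in $x,y,t$ bounded by $C$ in absolute value. *)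

(* Defs.v *)
From Stdlib Require Import Reals Lra.
From Coquelicot Require Import Coquelicot.
Open Scope R_scope.

(* Functions on T^2 x R are represented as functions R -> R -> R -> R
   (arguments x, y, t) that are 2*PI-periodic in x and y. *)
Definition periodic3 (f : R -> R -> R -> R) : Prop :=
  forall x y t, f (x + 2 * PI) y t = f x y t /\ f x (y + 2 * PI) t = f x y t.

Definition cont3 (f : R -> R -> R -> R) : Prop :=
  forall x y t eps, 0 < eps -> exists delta, 0 < delta /\
    forall x' y' t', Rabs (x' - x) < delta -> Rabs (y' - y) < delta ->
      Rabs (t' - t) < delta -> Rabs (f x' y' t' - f x y t) < eps.

Definition px (f : R -> R -> R -> R) : R -> R -> R -> R :=
  fun x y t => Derive (fun s => f s y t) x.
Definition py (f : R -> R -> R -> R) : R -> R -> R -> R :=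
  fun x y t => Derive (fun s => f x s t) y.
Definition pt (f : R -> R -> R -> R) : R -> R -> R -> R :=
  fun x y t => Derive (fun s => f x y s) t.

Definition C1_3 (f : R -> R -> R -> R) : Prop :=
  cont3 f /\
  (forall x y t, ex_derive (fun s => f s y t) x /\
                 ex_derive (fun s => f x s t) y /\
                 ex_derive (fun s => f x y s) t) /\
  cont3 (px f) /\ cont3 (py f) /\ cont3 (pt f).

Definition C2_3 (f : R -> R -> R -> R) : Prop :=
  C1_3 f /\ C1_3 (px f) /\ C1_3 (py f) /\ C1_3 (pt f).

Definition C2_1 (f : R -> R) : Prop :=
  (forall t, ex_derive f t) /\ (forall t, ex_derive (Derive_n f 1) t) /\
  (forall t, continuous (Derive_n f 2) t).

Definition reg_class (L C : R) (A11 A12 A21 A22 : R -> R -> R -> R) : Prop :=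
  (forall x y t xi1 xi2,
     / L * (xi1 ^ 2 + xi2 ^ 2)
       <= xi1 * (A11 x y t * xi1 + A12 x y t * xi2)
          + xi2 * (A21 x y t * xi1 + A22 x y t * xi2) /\
     xi1 * (A11 x y t * xi1 + A12 x y t * xi2)
          + xi2 * (A21 x y t * xi1 + A22 x y t * xi2)
       <= L * (xi1 ^ 2 + xi2 ^ 2)) /\
  (forall Aij, (Aij = A11 \/ Aij = A12 \/ Aij = A21 \/ Aij = A22) ->
     C1_3 Aij /\
     forall x y t, Rabs (px Aij x y t) <= C /\ Rabs (py Aij x y t) <= C /\
                   Rabs (pt Aij x y t) <= C).

Definition solves (u A11 A12 A21 A22 : R -> R -> R -> R) : Prop :=
  forall x y t,
    pt (pt u) x y t
    + px (fun x y t => A11 x y t * px u x y t + A12 x y t * py u x y t) x y t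
    + py (fun x y t => A21 x y t * px u x y t + A22 x y t * py u x y t) x y t
    = 0.

Definition is_diag_ab (a b : R) (A11 A12 A21 A22 : R -> R -> R -> R)
  (x y t : R) : Prop :=
  A11 x y t = a /\ A12 x y t = 0 /\ A21 x y t = 0 /\ A22 x y t = b.

Definition admissible (u A11 A12 A21 A22 : R -> R -> R -> R) : Prop :=
  C2_3 u /\ periodic3 u /\
  periodic3 A11 /\ periodic3 A12 /\ periodic3 A21 /\ periodic3 A22 /\
  reg_class 20 10 A11 A12 A21 A22 /\
  solves u A11 A12 A21 A22.

Definition u1 (a : R) (k : nat) : R -> R -> R -> R :=
  fun x y t => cos (INR k * x) * exp (- (INR k * sqrt a * t)).
Definition u2 (b : R) (k' : nat) : R -> R -> R -> R :=
  fun x y t => cos (INR k' * y) * exp (- (INR k' * sqrt b * t)).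

(* Main.v *)
Require Import Defs.
From Stdlib Require Import Reals Lra Lia.
From Coquelicot Require Import Coquelicot.
Open Scope R_scope.

Definition F3 (f : R -> R -> R -> R) (p : (R * R) * R) : R :=
  f (fst (fst p)) (snd (fst p)) (snd p).

Lemma ballR x e y : ball x e y <-> Rabs (y - x) < e.
Proof. reflexivity. Qed.

Lemma cont3_iff f : cont3 f <-> forall x y t, continuous (F3 f) ((x,y),t).
Proof.
split.
- intros H x y t. apply filterlim_locally. intros e.
  destruct (H x y t e (cond_pos e)) as [d [Hd Hf]].
  exists (mkposreal d Hd). intros [[x' y'] t'] [[Bx By] Bt].
  apply ballR. apply Hf; assumption.
- intros H x y t e He.
  pose proof (proj1 (filterlim_locally _ _) (H x y t) (mkposreal e He)) as [d Hd].
  exists d. split. apply cond_pos. intros x' y' t' h1 h2 h3.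
  exact (Hd ((x',y'),t') (conj (conj h1 h2) h3)).
Qed.

Lemma cont3_plus f g : cont3 f -> cont3 g -> cont3 (fun x y t => f x y t + g x y t).
Proof.
rewrite !cont3_iff. intros Hf Hg x y t.
apply (continuous_plus (F3 f) (F3 g)); auto.
Qed.

Lemma cont3_mult f g : cont3 f -> cont3 g -> cont3 (fun x y t => f x y t * g x y t).
Proof.
rewrite !cont3_iff. intros Hf Hg x y t.
apply (continuous_mult (F3 f) (F3 g)); auto.
Qed.

Lemma cont3_t p : (forall t, continuous p t) -> cont3 (fun x y t => p t).
Proof.
intros H. apply cont3_iff. intros x y t. unfold F3.
apply (continuous_comp snd p). apply continuous_snd. apply H.
Qed.

Lemma cont3_x p : (forall t, continuous p t) -> cont3 (fun x y t => p x).
Proof.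
intros H. apply cont3_iff. intros x y t. unfold F3.
apply (continuous_comp (fun q : (R*R)*R => fst (fst q)) p).
apply (continuous_comp fst fst). apply continuous_fst. apply continuous_fst.
apply H.
Qed.

Lemma cont3_y p : (forall t, continuous p t) -> cont3 (fun x y t => p y).
Proof.
intros H. apply cont3_iff. intros x y t. unfold F3.
apply (continuous_comp (fun q : (R*R)*R => snd (fst q)) p).
apply (continuous_comp fst snd). apply continuous_fst. apply continuous_snd.
apply H.
Qed.

Lemma cont3_ext f g : (forall x y t, f x y t = g x y t) -> cont3 g -> cont3 f.
Proof.
intros E H x y t e He. destruct (H x y t e He) as [d [Hd Hh]].
exists d; split; auto. intros; rewrite !E; auto.
Qed.

Lemma cont3_const c : cont3 (fun _ _ _ => c).
Proof. apply (cont3_t (fun _ => c)). intros; apply continuous_const. Qed.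

Lemma cont_der (f : R -> R) t : ex_derive f t -> continuous f t.
Proof. intros H. exact (ex_derive_continuous f t H). Qed.

Lemma cont_cos k : forall t, continuous (fun x => cos (k * x)) t.
Proof. intros t. apply cont_der. auto_derive. auto. Qed.
Lemma cont_sin k : forall t, continuous (fun x => sin (k * x)) t.
Proof. intros t. apply cont_der. auto_derive. auto. Qed.

Ltac c3 := repeat first [ apply cont3_plus | apply cont3_mult | apply cont3_const
  | apply (cont3_x (fun x => cos (_ * x))); apply cont_cos
  | apply (cont3_x (fun x => sin (_ * x))); apply cont_sin
  | apply (cont3_y (fun x => cos (_ * x))); apply cont_cos
  | apply (cont3_y (fun x => sin (_ * x))); apply cont_sin
  | apply cont3_t; assumption ].

Goal forall k (f : R -> R), (forall t, continuous f t) -> cont3 (fun x y t => f t * cos (k * x) + 3 * sin (k * y)).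
intros. c3.
Qed.

From Stdlib Require Import FunctionalExtensionality.

Lemma C1_3_of F Fx Fy Ft : cont3 F -> cont3 Fx -> cont3 Fy -> cont3 Ft ->
  (forall x y t, is_derive (fun s => F s y t) x (Fx x y t) /\
     is_derive (fun s => F x s t) y (Fy x y t) /\ is_derive (fun s => F x y s) t (Ft x y t)) ->
  C1_3 F /\ px F = Fx /\ py F = Fy /\ pt F = Ft.
Proof.
intros c0 cx cy ct D.
assert (ex : px F = Fx /\ py F = Fy /\ pt F = Ft).
{ repeat split; do 3 (apply functional_extensionality; intro); apply is_derive_unique;
  apply D. }
destruct ex as [ex [ey et]]. split; [|auto].
split; [auto|]. rewrite ex, ey, et. split; [|auto].
intros x y t; destruct (D x y t) as [h1 [h2 h3]]; repeat split; eexists; eauto.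
Qed.

Lemma abs3 c s1 s2 : -1 <= s1 <= 1 -> -1 <= s2 <= 1 -> Rabs (c * s1 * s2) <= Rabs c.
Proof.
intros h1 h2. rewrite !Rabs_mult.
assert (Rabs s1 <= 1) by (apply Rabs_le; lra).
assert (Rabs s2 <= 1) by (apply Rabs_le; lra).
pose proof (Rabs_pos c); pose proof (Rabs_pos s1); pose proof (Rabs_pos s2).
assert (Rabs c * Rabs s1 <= Rabs c) by nra. nra.
Qed.

Lemma ellip a b p1 p2 p3 p4 x1 x2 : 1/10 < a < 10 -> 1/10 < b < 10 ->
  Rabs p1 <= 1/100 -> Rabs p2 <= 1/100 -> Rabs p3 <= 1/100 -> Rabs p4 <= 1/100 ->
  / 20 * (x1 ^ 2 + x2 ^ 2) <= x1 * ((a + p1) * x1 + p2 * x2) + x2 * (p3 * x1 + (b + p4) * x2) /\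
  x1 * ((a + p1) * x1 + p2 * x2) + x2 * (p3 * x1 + (b + p4) * x2) <= 20 * (x1 ^ 2 + x2 ^ 2).
Proof.
intros ha hb h1 h2 h3 h4.
apply Rabs_le_between in h1; apply Rabs_le_between in h2; apply Rabs_le_between in h3; apply Rabs_le_between in h4.
pose proof (pow2_ge_0 (x1 - x2)); pose proof (pow2_ge_0 (x1 + x2)).
assert (-(x1^2+x2^2)/2 <= x1 * x2 <= (x1^2+x2^2)/2) by nra.
set (S := x1^2+x2^2) in *. set (w := x1 * x2) in *.
assert (0 <= (p2 + p3 + 1/50) * (S/2 + w)) by (apply Rmult_le_pos; lra).
assert (0 <= (1/50 - (p2 + p3)) * (S/2 - w)) by (apply Rmult_le_pos; lra).
assert (0 <= (p2 + p3 + 1/50) * (S/2 - w)) by (apply Rmult_le_pos; lra).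
assert (0 <= (1/50 - (p2 + p3)) * (S/2 + w)) by (apply Rmult_le_pos; lra).
pose proof (pow2_ge_0 x1); pose proof (pow2_ge_0 x2).
assert (0 <= (p1 + 1/100) * x1^2) by (apply Rmult_le_pos; lra).
assert (0 <= (1/100 - p1) * x1^2) by (apply Rmult_le_pos; lra).
assert (0 <= (p4 + 1/100) * x2^2) by (apply Rmult_le_pos; lra).
assert (0 <= (1/100 - p4) * x2^2) by (apply Rmult_le_pos; lra).
assert (0 <= (a - 1/10) * x1^2) by (apply Rmult_le_pos; lra).
assert (0 <= (10 - a) * x1^2) by (apply Rmult_le_pos; lra).
assert (0 <= (b - 1/10) * x2^2) by (apply Rmult_le_pos; lra).
assert (0 <= (10 - b) * x2^2) by (apply Rmult_le_pos; lra).
assert (E : x1 * ((a + p1) * x1 + p2 * x2) + x2 * (p3 * x1 + (b + p4) * x2)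
  = a * x1^2 + p1 * x1^2 + (p2 + p3) * w + b * x2^2 + p4 * x2^2) by (unfold w; ring).
rewrite E. unfold S in *. split; nra.
Qed.

Definition Ugen (k k' : nat) (f g : R -> R) : R -> R -> R -> R :=
  fun x y t => f t * cos (INR k * x) + g t * cos (INR k' * y).
Definition Acc (a : R) (k k' : nat) (c : R -> R) : R -> R -> R -> R :=
  fun x y t => a + c t * cos (INR k * x) * cos (INR k' * y).
Definition Ass (k k' : nat) (c : R -> R) : R -> R -> R -> R :=
  fun x y t => c t * sin (INR k * x) * sin (INR k' * y).

Ltac dsimp H := rewrite ?(is_derive_unique _ _ _ (H _)).

Lemma Acc_C1 a k k' c d : (forall t, is_derive c t (d t)) -> (forall t, continuous d t) ->
  C1_3 (Acc a k k' c) /\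
  px (Acc a k k' c) = (fun x y t => c t * (- INR k * sin (INR k * x)) * cos (INR k' * y)) /\
  py (Acc a k k' c) = (fun x y t => c t * cos (INR k * x) * (- INR k' * sin (INR k' * y))) /\
  pt (Acc a k k' c) = (fun x y t => d t * cos (INR k * x) * cos (INR k' * y)).
Proof.
intros Hc Hd. assert (cc : forall t, continuous c t) by (intro; apply cont_der; eexists; eauto).
apply C1_3_of; unfold Acc.
1-4: c3.
intros x y t; split; [|split].
- auto_derive; auto; ring.
- auto_derive; auto; ring.
- auto_derive. eexists; eauto. dsimp Hc. ring.
Qed.

Lemma Ass_C1 k k' c d : (forall t, is_derive c t (d t)) -> (forall t, continuous d t) ->
  C1_3 (Ass k k' c) /\
  px (Ass k k' c) = (fun x y t => c t * (INR k * cos (INR k * x)) * sin (INR k' * y)) /\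
  py (Ass k k' c) = (fun x y t => c t * sin (INR k * x) * (INR k' * cos (INR k' * y))) /\
  pt (Ass k k' c) = (fun x y t => d t * sin (INR k * x) * sin (INR k' * y)).
Proof.
intros Hc Hd. assert (cc : forall t, continuous c t) by (intro; apply cont_der; eexists; eauto).
apply C1_3_of; unfold Ass.
1-4: c3.
intros x y t; split; [|split].
- auto_derive; auto; ring.
- auto_derive; auto; ring.
- auto_derive. eexists; eauto. dsimp Hc. ring.
Qed.

Lemma Ugen_C2 k k' f f1 f2 g g1 g2 :
  (forall t, is_derive f t (f1 t)) -> (forall t, is_derive f1 t (f2 t)) -> (forall t, continuous f2 t) ->
  (forall t, is_derive g t (g1 t)) -> (forall t, is_derive g1 t (g2 t)) -> (forall t, continuous g2 t) ->
  C2_3 (Ugen k k' f g) /\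
  px (Ugen k k' f g) = (fun x y t => - INR k * f t * sin (INR k * x)) /\
  py (Ugen k k' f g) = (fun x y t => - INR k' * g t * sin (INR k' * y)) /\
  pt (pt (Ugen k k' f g)) = (fun x y t => f2 t * cos (INR k * x) + g2 t * cos (INR k' * y)).
Proof.
intros Hf Hf1 Hf2 Hg Hg1 Hg2.
assert (cf : forall t, continuous f t) by (intro; apply cont_der; eexists; eauto).
assert (cf1 : forall t, continuous f1 t) by (intro; apply cont_der; eexists; eauto).
assert (cg : forall t, continuous g t) by (intro; apply cont_der; eexists; eauto).
assert (cg1 : forall t, continuous g1 t) by (intro; apply cont_der; eexists; eauto).
destruct (C1_3_of (Ugen k k' f g) (fun x y t => - INR k * f t * sin (INR k * x))
  (fun x y t => - INR k' * g t * sin (INR k' * y))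
  (fun x y t => f1 t * cos (INR k * x) + g1 t * cos (INR k' * y))) as [C0 [ex [ey et]]].
1-4: unfold Ugen; c3.
{ intros x y t; unfold Ugen; split; [|split].
- auto_derive; auto; ring.
- auto_derive; auto; ring.
- auto_derive. repeat split; eexists; eauto. dsimp Hf; dsimp Hg. ring. }
destruct (C1_3_of (fun x y t => - INR k * f t * sin (INR k * x))
  (fun x y t => - INR k * f t * (INR k * cos (INR k * x)))
  (fun x y t => 0)
  (fun x y t => - INR k * f1 t * sin (INR k * x))) as [Cx _].
1-4: c3.
{ intros x y t; split; [|split].
- auto_derive; auto; ring.
- auto_derive; auto; ring.
- auto_derive. eexists; eauto. dsimp Hf. ring. }
destruct (C1_3_of (fun x y t => - INR k' * g t * sin (INR k' * y))
  (fun x y t => 0)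
  (fun x y t => - INR k' * g t * (INR k' * cos (INR k' * y)))
  (fun x y t => - INR k' * g1 t * sin (INR k' * y))) as [Cy _].
1-4: c3.
{ intros x y t; split; [|split].
- auto_derive; auto; ring.
- auto_derive; auto; ring.
- auto_derive. eexists; eauto. dsimp Hg. ring. }
destruct (C1_3_of (fun x y t => f1 t * cos (INR k * x) + g1 t * cos (INR k' * y))
  (fun x y t => f1 t * (- INR k * sin (INR k * x)))
  (fun x y t => g1 t * (- INR k' * sin (INR k' * y)))
  (fun x y t => f2 t * cos (INR k * x) + g2 t * cos (INR k' * y))) as [Ct [_ [_ ett]]].
1-4: c3.
{ intros x y t; split; [|split].
- auto_derive; auto; ring.
- auto_derive; auto; ring.
- auto_derive. repeat split; eexists; eauto. dsimp Hf1; dsimp Hg1. ring. }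
split; [|split; [auto|split; [auto|]]].
- split; [auto|]. rewrite ex, ey, et. auto.
- rewrite et. exact ett.
Qed.

Lemma percos k x : cos (INR k * (x + 2 * PI)) = cos (INR k * x).
Proof. replace (INR k * (x + 2 * PI)) with (INR k * x + 2 * INR k * PI) by ring. apply cos_period. Qed.
Lemma persin k x : sin (INR k * (x + 2 * PI)) = sin (INR k * x).
Proof. replace (INR k * (x + 2 * PI)) with (INR k * x + 2 * INR k * PI) by ring. apply sin_period. Qed.

Definition Xexpr (a : R) (k k' : nat) (f g c1 c2 : R -> R) x y t :=
  (c1 t * (- INR k * sin (INR k * x)) * cos (INR k' * y)) * (- INR k * f t * sin (INR k * x))
  + (a + c1 t * cos (INR k * x) * cos (INR k' * y)) * (- INR k * f t * (INR k * cos (INR k * x)))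
  + (c2 t * (INR k * cos (INR k * x)) * sin (INR k' * y)) * (- INR k' * g t * sin (INR k' * y)).
Definition Yexpr (b : R) (k k' : nat) (f g c3 c4 : R -> R) x y t :=
  (c3 t * sin (INR k * x) * (INR k' * cos (INR k' * y))) * (- INR k * f t * sin (INR k * x))
  + (c4 t * cos (INR k * x) * (- INR k' * sin (INR k' * y))) * (- INR k' * g t * sin (INR k' * y))
  + (b + c4 t * cos (INR k * x) * cos (INR k' * y)) * (- INR k' * g t * (INR k' * cos (INR k' * y))).

Lemma gen_adm k k' a b f f1 f2 g g1 g2 c1 c2 c3 c4 d1 d2 d3 d4 :
  (forall t, is_derive f t (f1 t)) -> (forall t, is_derive f1 t (f2 t)) -> (forall t, continuous f2 t) ->
  (forall t, is_derive g t (g1 t)) -> (forall t, is_derive g1 t (g2 t)) -> (forall t, continuous g2 t) ->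
  (forall t, is_derive c1 t (d1 t)) -> (forall t, continuous d1 t) ->
  (forall t, is_derive c2 t (d2 t)) -> (forall t, continuous d2 t) ->
  (forall t, is_derive c3 t (d3 t)) -> (forall t, continuous d3 t) ->
  (forall t, is_derive c4 t (d4 t)) -> (forall t, continuous d4 t) ->
  1 <= INR k <= INR k' -> 1/10 < a < 10 -> 1/10 < b < 10 ->
  (forall t, INR k' * Rabs (c1 t) <= 1/100 /\ INR k' * Rabs (c2 t) <= 1/100 /\
             INR k' * Rabs (c3 t) <= 1/100 /\ INR k' * Rabs (c4 t) <= 1/100) ->
  (forall t, Rabs (d1 t) <= 10 /\ Rabs (d2 t) <= 10 /\ Rabs (d3 t) <= 10 /\ Rabs (d4 t) <= 10) ->
  (forall x y t, f2 t * cos (INR k * x) + g2 t * cos (INR k' * y)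
     + Xexpr a k k' f g c1 c2 x y t + Yexpr b k k' f g c3 c4 x y t = 0) ->
  admissible (Ugen k k' f g) (Acc a k k' c1) (Ass k k' c2) (Ass k k' c3) (Acc b k k' c4).
Proof.
intros Hf Hf1 Hf2 Hg Hg1 Hg2 Hc1 Hd1 Hc2 Hd2 Hc3 Hd3 Hc4 Hd4 Hk Ha Hb Bc Bd Heq.
destruct (Ugen_C2 k k' f f1 f2 g g1 g2) as [CU [ux [uy utt]]]; auto.
destruct (Acc_C1 a k k' c1 d1) as [CA1 [A1x [A1y A1t]]]; auto.
destruct (Ass_C1 k k' c2 d2) as [CA2 [A2x [A2y A2t]]]; auto.
destruct (Ass_C1 k k' c3 d3) as [CA3 [A3x [A3y A3t]]]; auto.
destruct (Acc_C1 b k k' c4 d4) as [CA4 [A4x [A4y A4t]]]; auto.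
split; [auto|]. split.
{ intros x y t; unfold Ugen; rewrite !percos; auto. }
split. { intros x y t; unfold Acc; rewrite !percos; auto. }
split. { intros x y t; unfold Ass; rewrite !persin; auto. }
split. { intros x y t; unfold Ass; rewrite !persin; auto. }
split. { intros x y t; unfold Acc; rewrite !percos; auto. }
split.
- split.
  + intros x y t x1 x2. destruct (Bc t) as [b1 [b2 [b3 b4]]].
    assert (Habs : forall c s1 s2, INR k' * Rabs c <= 1/100 -> -1 <= s1 <= 1 -> -1 <= s2 <= 1 ->
      Rabs (c * s1 * s2) <= 1/100).
    { intros c s1 s2 h h1 h2. pose proof (abs3 c s1 s2 h1 h2). pose proof (Rabs_pos c). nra. }
    unfold Acc, Ass.
    replace (a + c1 t * cos (INR k * x) * cos (INR k' * y)) with (a + (c1 t * cos (INR k * x) * cos (INR k' * y))) by ring.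
    replace (b + c4 t * cos (INR k * x) * cos (INR k' * y)) with (b + (c4 t * cos (INR k * x) * cos (INR k' * y))) by ring.
    apply ellip; auto; apply Habs; auto; try apply COS_bound; apply SIN_bound.
  + intros Aij HA.
    assert (Habs : forall c s1 s2 m, INR k' * Rabs c <= 1/100 -> -1 <= s1 <= 1 -> -1 <= s2 <= 1 ->
      0 <= m <= INR k' -> Rabs (c * (m * s1) * s2) <= 10 /\ Rabs (c * s2 * (m * s1)) <= 10
      /\ Rabs (c * (- m * s1) * s2) <= 10 /\ Rabs (c * s2 * (- m * s1)) <= 10).
    { intros c s1 s2 m h h1 h2 hm.
      assert (Rabs c * m <= 1/100). { pose proof (Rabs_pos c). nra. }
      assert (Rabs (c * (m * s1) * s2) <= 10 /\ Rabs (c * (- m * s1) * s2) <= 10).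
      { split; [replace (c * (m * s1) * s2) with ((c * m) * s1 * s2) by ring
                |replace (c * (- m * s1) * s2) with ((c * m) * (- s1) * s2) by ring];
        (eapply Rle_trans; [apply abs3; lra|]); rewrite Rabs_mult, (Rabs_pos_eq m) by lra; lra. }
      replace (c * s2 * (m * s1)) with (c * (m * s1) * s2) by ring.
      replace (c * s2 * (- m * s1)) with (c * (- m * s1) * s2) by ring. tauto. }
    assert (Hd : forall d s1 s2, Rabs d <= 10 -> -1 <= s1 <= 1 -> -1 <= s2 <= 1 -> Rabs (d * s1 * s2) <= 10).
    { intros d s1 s2 h h1 h2. pose proof (abs3 d s1 s2 h1 h2). lra. }
    assert (K1 : 0 <= INR k <= INR k') by lra. assert (K2 : 0 <= INR k' <= INR k') by lra.
    destruct HA as [HA|[HA|[HA|HA]]]; subst Aij; (split; [assumption|]); intros x y t;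
    destruct (Bc t) as [b1 [b2 [b3 b4]]]; destruct (Bd t) as [e1 [e2 [e3 e4]]];
    rewrite ?A1x, ?A1y, ?A1t, ?A2x, ?A2y, ?A2t, ?A3x, ?A3y, ?A3t, ?A4x, ?A4y, ?A4t;
    pose proof (SIN_bound (INR k * x)); pose proof (COS_bound (INR k * x));
    pose proof (SIN_bound (INR k' * y)); pose proof (COS_bound (INR k' * y));
    repeat split; first [apply Hd; assumption | apply Habs; assumption | idtac].
    all: idtac.
- intros x y t. rewrite utt. rewrite ux, uy. unfold px, py.
  rewrite (is_derive_unique _ _ (Xexpr a k k' f g c1 c2 x y t)).
  rewrite (is_derive_unique _ _ (Yexpr b k k' f g c3 c4 x y t)).
  apply Heq.
  + unfold Acc, Ass, Yexpr. auto_derive; auto; ring.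
  + unfold Acc, Ass, Xexpr. auto_derive; auto; ring.
Qed.

Definition pw (G H : R -> R) (x0 : R) : R -> R :=
  fun x => if Rle_dec x x0 then G x else H x.

Lemma loc_left (x x0 : R) (P : R -> Prop) : x < x0 -> (forall y, y < x0 -> P y) -> locally x P.
Proof.
intros h HP. assert (e : 0 < x0 - x) by lra. exists (mkposreal _ e).
intros y Hy. apply ballR in Hy. simpl in Hy. apply HP. apply Rabs_lt_between in Hy. unfold minus, plus, opp in Hy; simpl in Hy. lra.
Qed.
Lemma loc_right (x x0 : R) (P : R -> Prop) : x0 < x -> (forall y, x0 < y -> P y) -> locally x P.
Proof.
intros h HP. assert (e : 0 < x - x0) by lra. exists (mkposreal _ e).
intros y Hy. apply ballR in Hy. simpl in Hy. apply HP. apply Rabs_lt_between in Hy. unfold minus, plus, opp in Hy; simpl in Hy. lra.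
Qed.

Lemma pw_derive G H G' H' x0 : (forall x, is_derive G x (G' x)) -> (forall x, is_derive H x (H' x)) ->
  G x0 = H x0 -> G' x0 = H' x0 -> forall x, is_derive (pw G H x0) x (pw G' H' x0 x).
Proof.
intros HG HH E E' x. destruct (Rtotal_order x x0) as [h|[h|h]].
- unfold pw at 2; destruct (Rle_dec x x0); [|lra].
  apply (is_derive_ext_loc G). apply (loc_left x x0); auto.
  intros y Hy; unfold pw; destruct (Rle_dec y x0); auto; lra. auto.
- subst x. unfold pw at 2; destruct (Rle_dec x0 x0); [|lra].
  apply is_derive_Reals. intros e He.
  destruct (proj1 (is_derive_Reals _ _ _) (HG x0) e He) as [d1 D1].
  destruct (proj1 (is_derive_Reals _ _ _) (HH x0) e He) as [d2 D2].
  assert (hd : 0 < Rmin d1 d2) by (apply Rmin_pos; apply cond_pos).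
  exists (mkposreal _ hd). intros h hn hh. simpl in hh.
  assert (Rabs h < d1) by (eapply Rlt_le_trans; [exact hh| apply Rmin_l]).
  assert (Rabs h < d2) by (eapply Rlt_le_trans; [exact hh| apply Rmin_r]).
  unfold pw. destruct (Rle_dec x0 x0); [|lra]. destruct (Rle_dec (x0 + h) x0).
  + apply D1; auto.
  + rewrite E, E'. apply D2; auto.
- unfold pw at 2; destruct (Rle_dec x x0); [lra|].
  apply (is_derive_ext_loc H). apply (loc_right x x0); auto.
  intros y Hy; unfold pw; destruct (Rle_dec y x0); auto; lra. auto.
Qed.

Lemma pw_cont G H x0 : (forall x, continuous G x) -> (forall x, continuous H x) ->
  G x0 = H x0 -> forall x, continuous (pw G H x0) x.
Proof.
intros HG HH E x. destruct (Rtotal_order x x0) as [h|[h|h]].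
- apply (continuous_ext_loc _ G). apply (loc_left x x0); auto.
  intros y Hy; unfold pw; destruct (Rle_dec y x0); auto; lra. auto.
- subst x. intros P [e He]. unfold pw in He at 1; destruct (Rle_dec x0 x0) in He; [|lra].
  assert (L1 := HG x0 (ball (G x0) e) (locally_ball _ _)).
  assert (L2 := HH x0 (ball (G x0) e) ltac:(rewrite E; apply locally_ball)).
  simpl in L1, L2. unfold filtermap in *.
  generalize (filter_and _ _ L1 L2). apply filter_imp. intros y [h1 h2]. apply He.
  unfold pw; destruct (Rle_dec y x0); auto.
- apply (continuous_ext_loc _ H). apply (loc_right x x0); auto.
  intros y Hy; unfold pw; destruct (Rle_dec y x0); auto; lra. auto.
Qed.

Definition P0 s := 35 * s^4 - 84 * s^5 + 70 * s^6 - 20 * s^7.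
Definition P1 s := 140 * s^3 - 420 * s^4 + 420 * s^5 - 140 * s^6.
Definition P2 s := 420 * s^2 - 1680 * s^3 + 2100 * s^4 - 840 * s^5.
Definition P3 s := 840 * s - 5040 * s^2 + 8400 * s^3 - 4200 * s^4.

Definition inner (P : R -> R) (r : R) : R -> R := pw P (fun _ => r) 1.
Definition chi (P : R -> R) (r : R) : R -> R := pw (fun _ => 0) (inner P r) 0.

Definition chi0 := chi P0 1.
Definition chi1 := chi P1 0.
Definition chi2 := chi P2 0.
Definition chi3 := chi P3 0.

Lemma chi_der (P Q : R -> R) r : (forall s, is_derive P s (Q s)) -> P 1 = r -> Q 1 = 0 -> P 0 = 0 -> Q 0 = 0 ->
  forall s, is_derive (chi P r) s (chi Q 0 s).
Proof.
intros HP h1 h2 h3 h4. unfold chi. apply pw_derive.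
- intros; auto_derive; auto; ring.
- intros; unfold inner. apply pw_derive; auto. intros; auto_derive; auto; ring.
- unfold inner, pw. destruct (Rle_dec 0 1); lra.
- unfold inner, pw. destruct (Rle_dec 0 1); lra.
Qed.

Lemma chi0_der s : is_derive chi0 s (chi1 s).
Proof. apply chi_der; unfold P0, P1; try (intros; auto_derive; auto; ring); ring. Qed.
Lemma chi1_der s : is_derive chi1 s (chi2 s).
Proof. apply chi_der; unfold P2, P1; try (intros; auto_derive; auto; ring); ring. Qed.
Lemma chi2_der s : is_derive chi2 s (chi3 s).
Proof. apply chi_der; unfold P2, P3; try (intros; auto_derive; auto; ring); ring. Qed.
Lemma P3_1 : P3 1 = 0. Proof. unfold P3; ring. Qed.
Lemma chi3_cont s : continuous chi3 s.
Proof.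
unfold chi3, chi. apply pw_cont.
- intros; apply continuous_const.
- intros; unfold inner; apply pw_cont.
  + intros; apply cont_der; unfold P3; auto_derive; auto.
  + intros; apply continuous_const.
  + exact P3_1.
- change (0 = inner P3 0 0 :> R). unfold inner, pw. destruct (Rle_dec 0 1); [unfold P3; ring|lra].
Qed.

Lemma chi_out P r s : P 1 = r -> (s <= 0 -> chi P r s = 0) /\ (1 <= s -> chi P r s = r).
Proof.
intros E. unfold chi, inner, pw. split; intros.
- destruct (Rle_dec s 0); lra.
- destruct (Rle_dec s 0); [lra|]. destruct (Rle_dec s 1); auto. replace s with 1 by lra. auto.
Qed.

Lemma chi_bound P r B : 0 <= B -> Rabs r <= B -> (forall s, 0 <= s <= 1 -> Rabs (P s) <= B) ->
  forall s, Rabs (chi P r s) <= B.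
Proof.
intros HB Hr HP s. unfold chi, inner, pw.
destruct (Rle_dec s 0). rewrite Rabs_R0; auto.
destruct (Rle_dec s 1); auto. apply HP; lra.
Qed.

Lemma powb s n : 0 <= s <= 1 -> 0 <= s ^ n <= 1.
Proof. intros h. split. apply pow_le; lra. rewrite <- (pow1 n). apply pow_incr; lra. Qed.

Lemma chi0_b s : Rabs (chi0 s) <= 209.
Proof. apply chi_bound; try (rewrite Rabs_R1; lra); try lra. intros x hx; unfold P0.
pose proof (powb x 4 hx); pose proof (powb x 5 hx); pose proof (powb x 6 hx); pose proof (powb x 7 hx).
apply Rabs_le; lra. Qed.
Lemma chi1_b s : Rabs (chi1 s) <= 1120.
Proof. apply chi_bound; try (rewrite Rabs_R0; lra); try lra. intros x hx; unfold P1.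
pose proof (powb x 3 hx); pose proof (powb x 4 hx); pose proof (powb x 5 hx); pose proof (powb x 6 hx).
apply Rabs_le; lra. Qed.
Lemma chi2_b s : Rabs (chi2 s) <= 5040.
Proof. apply chi_bound; try (rewrite Rabs_R0; lra); try lra. intros x hx; unfold P2.
pose proof (powb x 2 hx); pose proof (powb x 3 hx); pose proof (powb x 4 hx); pose proof (powb x 5 hx).
apply Rabs_le; lra. Qed.
Lemma chi3_b s : Rabs (chi3 s) <= 18480.
Proof. apply chi_bound; try (rewrite Rabs_R0; lra); try lra. intros x hx; unfold P3.
pose proof (powb x 1 hx); pose proof (powb x 2 hx); pose proof (powb x 3 hx); pose proof (powb x 4 hx).
rewrite pow_1 in *. apply Rabs_le; lra. Qed.

Lemma chi0_out s : (s <= 0 -> chi0 s = 0) /\ (1 <= s -> chi0 s = 1).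
Proof. apply chi_out. unfold P0; ring. Qed.
Lemma chi1_out s : (s <= 0 -> chi1 s = 0) /\ (1 <= s -> chi1 s = 0).
Proof. apply chi_out. unfold P1; ring. Qed.
Lemma chi2_out s : (s <= 0 -> chi2 s = 0) /\ (1 <= s -> chi2 s = 0).
Proof. apply chi_out. unfold P2; ring. Qed.
Lemma chi3_out s : (s <= 0 -> chi3 s = 0) /\ (1 <= s -> chi3 s = 0).
Proof. apply chi_out. unfold P3; ring. Qed.

Lemma absmul x y A B : Rabs x <= A -> Rabs y <= B -> Rabs (x * y) <= A * B.
Proof. intros h1 h2. rewrite Rabs_mult. pose proof (Rabs_pos x); pose proof (Rabs_pos y).
apply Rmult_le_compat; auto. Qed.

Lemma NumC T kr ks g e X1 X2 : 0 < T -> 10^13 * T <= 1 -> 1 <= kr -> 1 <= ks -> 0 <= g <= 4 * ks -> ks * T <= 1 ->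
  0 < e <= 81 -> Rabs X1 <= 1120 -> Rabs X2 <= 5040 ->
  ks * Rabs (2 * T^3 / (kr * ks) * e * (X2 / (T * T) - 2 * g * X1 / T)) <= 1/100.
Proof.
intros hT hT2 hkr hks hg hkT he h1 h2.
assert (E : ks * Rabs (2 * T^3 / (kr * ks) * e * (X2 / (T * T) - 2 * g * X1 / T))
   = 2 * e / kr * T * Rabs (X2 - 2 * (g * T) * X1)).
{ replace (2 * T^3 / (kr * ks) * e * (X2 / (T * T) - 2 * g * X1 / T)) with
   ((2 * e / kr * T / ks) * (X2 - 2 * (g * T) * X1)) by (field; lra).
  rewrite Rabs_mult, (Rabs_pos_eq (2 * e / kr * T / ks)).
  field; lra. apply Rmult_le_pos; [|left; apply Rinv_0_lt_compat; lra].
  apply Rmult_le_pos; [|lra]. apply Rmult_le_pos; [lra|left; apply Rinv_0_lt_compat; lra]. }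
rewrite E.
assert (Rabs (2 * (g * T) * X1) <= 8 * 1120).
{ replace (2 * (g * T) * X1) with ((2 * (g * T)) * X1) by ring. apply absmul; auto.
  rewrite Rabs_pos_eq; nra. }
assert (Y : Rabs (X2 - 2 * (g * T) * X1) <= 14000).
{ eapply Rle_trans. apply Rabs_triang. rewrite Rabs_Ropp. lra. }
assert (0 <= 2 * e / kr <= 162).
{ split. apply Rmult_le_pos; [lra|left; apply Rinv_0_lt_compat; lra].
  apply Rmult_le_reg_r with kr; [lra|]. unfold Rdiv. rewrite Rmult_assoc, Rinv_l by lra. nra. }
pose proof (Rabs_pos (X2 - 2 * (g * T) * X1)).
assert (2 * e / kr * T <= 162 * T) by nra.
assert (162 * T * 14000 <= 1/100) by (simpl in hT2; lra).
nra.
Qed.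

Lemma NumD T kr ks g q e X1 X2 X3 : 0 < T -> 1 <= kr -> 1 <= ks -> 10^7 <= kr * ks ->
  0 <= g * T <= 4 -> Rabs (q * T) <= 8 ->
  0 < e <= 81 -> Rabs X1 <= 1120 -> Rabs X2 <= 5040 -> Rabs X3 <= 18480 ->
  Rabs (2 * T^3 / (kr * ks) * e * (q * (X2 / (T * T) - 2 * g * X1 / T) + X3 / (T * T * T) - 2 * g * X2 / (T * T))) <= 10.
Proof.
intros hT hkr hks hkk hg hq he h1 h2 h3.
replace (2 * T^3 / (kr * ks) * e * (q * (X2 / (T * T) - 2 * g * X1 / T) + X3 / (T * T * T) - 2 * g * X2 / (T * T)))
  with ((2 * e / (kr * ks)) * ((q * T) * X2 - 2 * (q * T) * ((g * T) * X1) + X3 - 2 * (g * T) * X2)) by (field; lra).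
assert (A1 : Rabs ((q * T) * X2) <= 8 * 5040) by (apply absmul; auto).
assert (A2 : Rabs ((g * T) * X1) <= 4 * 1120) by (apply absmul; auto; rewrite Rabs_pos_eq; lra).
assert (A3 : Rabs (2 * (q * T) * ((g * T) * X1)) <= 16 * (4 * 1120)).
{ replace (2 * (q * T) * ((g * T) * X1)) with ((2 * (q * T)) * ((g * T) * X1)) by ring.
  apply absmul; auto. rewrite Rabs_mult, Rabs_pos_eq by lra. lra. }
assert (A4 : Rabs (2 * (g * T) * X2) <= 8 * 5040).
{ replace (2 * (g * T) * X2) with ((2 * (g * T)) * X2) by ring. apply absmul; auto. rewrite Rabs_pos_eq; lra. }
assert (Y : Rabs ((q * T) * X2 - 2 * (q * T) * ((g * T) * X1) + X3 - 2 * (g * T) * X2) <= 200000).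
{ unfold Rminus. eapply Rle_trans; [apply Rabs_triang|]. rewrite Rabs_Ropp.
  eapply Rle_trans; [apply Rplus_le_compat_r; apply Rabs_triang|].
  eapply Rle_trans; [apply Rplus_le_compat_r; apply Rplus_le_compat_r; apply Rabs_triang|].
  rewrite Rabs_Ropp. lra. }
rewrite Rabs_mult. rewrite (Rabs_pos_eq (2 * e / (kr * ks))).
2: { apply Rmult_le_pos; [lra|left; apply Rinv_0_lt_compat; nra]. }
assert (2 * e / (kr * ks) <= 162 / 10^7).
{ apply Rmult_le_reg_r with (kr * ks); [nra|]. unfold Rdiv. rewrite Rmult_assoc, Rinv_l by nra.
  simpl in hkk |- *. nra. }
assert (0 <= 2 * e / (kr * ks)) by (apply Rmult_le_pos; [lra|left; apply Rinv_0_lt_compat; nra]).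
pose proof (Rabs_pos ((q * T) * X2 - 2 * (q * T) * ((g * T) * X1) + X3 - 2 * (g * T) * X2)).
simpl in *. nra.
Qed.

Lemma cplus (f g : R -> R) x : continuous f x -> continuous g x -> continuous (fun y => f y + g y) x.
Proof. intros; apply (continuous_plus f g); auto. Qed.
Lemma cmul (f g : R -> R) x : continuous f x -> continuous g x -> continuous (fun y => f y * g y) x.
Proof. intros; apply (continuous_mult f g); auto. Qed.
Lemma copp (f : R -> R) x : continuous f x -> continuous (fun y => - f y) x.
Proof. intros; apply (continuous_opp f); auto. Qed.
Lemma cminus (f g : R -> R) x : continuous f x -> continuous g x -> continuous (fun y => f y - g y) x.
Proof. intros; apply cplus; auto; apply copp; auto. Qed.
Lemma cconst (c : R) x : continuous (fun _ : R => c) x.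
Proof. apply continuous_const. Qed.
Lemma cdivc (f : R -> R) c x : continuous f x -> continuous (fun y => f y / c) x.
Proof. intros; apply (cmul f (fun _ => / c)); auto. apply cconst. Qed.
Lemma ccomp (Y : R -> R) T x : (forall s, continuous Y s) -> continuous (fun y => Y (y / T)) x.
Proof. intros H. apply (continuous_comp (fun y => y / T) Y x); auto. apply cont_der. auto_derive; auto. Qed.
Lemma cexp q x : continuous (fun t => exp (q * t)) x.
Proof. apply cont_der. auto_derive; auto. Qed.

Definition ccf K q g T (Y1 Y2 : R -> R) : R -> R :=
  fun t => K * exp (q * t) * (Y2 (t / T) / (T * T) - 2 * g * Y1 (t / T) / T).
Definition dccf K q g T (Y1 Y2 Y3 : R -> R) : R -> R :=
  fun t => K * exp (q * t) * (q * (Y2 (t / T) / (T * T) - 2 * g * Y1 (t / T) / T)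
     + Y3 (t / T) / (T * T * T) - 2 * g * Y2 (t / T) / (T * T)).

Lemma alg_ccf : forall K q g T y1 y2 y3 E : R, T <> 0 ->
  K * (q * 1 * E) * (y2 * / (T * T) + - (2 * g * y1 * / T)) +
  K * E * (1 * / T * y3 * / (T * T) + - (2 * g * (1 * / T * y2) * / T)) =
  K * E *
  (q * (y2 * / (T * T) - 2 * g * y1 * / T) + y3 * / (T * T * T) -
   2 * g * y2 * / (T * T)).
Proof. intros. field. auto. Qed.

Lemma ccf_der K q g T (Y1 Y2 Y3 : R -> R) : T <> 0 -> (forall s, is_derive Y1 s (Y2 s)) -> (forall s, is_derive Y2 s (Y3 s)) ->
  forall t, is_derive (ccf K q g T Y1 Y2) t (dccf K q g T Y1 Y2 Y3 t).
Proof.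
intros hT H1 H2 t. unfold ccf, dccf. auto_derive.
- repeat split; auto; eexists; eauto.
- rewrite (is_derive_unique _ _ _ (H1 _)), (is_derive_unique _ _ _ (H2 _)). match goal with |- ?A = ?B => change (A = B :> R) end. unfold Rdiv. set (y1 := Y1 (t * / T)). set (y2 := Y2 (t * / T)). set (y3 := Y3 (t * / T)). set (E := exp (q * t)). exact (alg_ccf K q g T y1 y2 y3 E hT).
Qed.

Ltac cc1 := repeat first [ assumption | apply cexp | apply cconst | apply ccomp; assumption
  | apply cdivc | apply cplus | apply cminus | apply copp | apply cmul ].

Lemma dccf_cont K q g T (Y1 Y2 Y3 : R -> R) : (forall s, continuous Y1 s) -> (forall s, continuous Y2 s) -> (forall s, continuous Y3 s) ->
  forall t, continuous (dccf K q g T Y1 Y2 Y3) t.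
Proof. intros h1 h2 h3 t. unfold dccf.
apply cmul. apply cmul. apply cconst. apply cexp.
apply cminus. apply cplus. apply cmul. apply cconst.
apply cminus. apply cdivc; apply ccomp; auto. apply cdivc. apply cmul. apply cconst. apply ccomp; auto.
apply cdivc; apply ccomp; auto. apply cdivc. apply cmul. apply cconst. apply ccomp; auto. Qed.

Lemma DerN (f f1 f2 : R -> R) : (forall t, is_derive f t (f1 t)) -> (forall t, is_derive f1 t (f2 t)) ->
  (forall t, continuous f2 t) ->
  C2_1 f /\ forall t, Derive_n f 0 t = f t /\ Derive_n f 1 t = f1 t /\ Derive_n f 2 t = f2 t.
Proof.
intros H1 H2 H3.
assert (D1 : forall t, Derive_n f 1 t = f1 t) by (intro; simpl; apply is_derive_unique; auto).
assert (D2 : forall t, Derive_n f 2 t = f2 t).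
{ intro; simpl. rewrite (Derive_ext _ f1). apply is_derive_unique; auto. intro; apply is_derive_unique; auto. }
split.
- split; [intro; eexists; eauto|split].
  + intro. apply (ex_derive_ext f1). intro; rewrite D1; auto. eexists; eauto.
  + intro. apply (continuous_ext f2). intro; rewrite D2; auto. auto.
- intros t; repeat split; auto.
Qed.

Definition fE (g : R) : R -> R := fun t => exp (- (g * t)).
Definition gB T g (X0 : R -> R) : R -> R := fun t => T^3 * X0 (t / T) * exp (- (g * t)).
Definition gB1 T g (X0 X1 : R -> R) : R -> R := fun t => T^3 * (X1 (t / T) / T - g * X0 (t / T)) * exp (- (g * t)).
Definition gB2 T g (X0 X1 X2 : R -> R) : R -> R :=
  fun t => T^3 * (X2 (t / T) / (T * T) - 2 * g * X1 (t / T) / T + g * g * X0 (t / T)) * exp (- (g * t)).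

Lemma fE_der g : (forall t, is_derive (fE g) t (- g * fE g t)) /\
  (forall t, is_derive (fun t => - g * fE g t) t (g * g * fE g t)) /\ (forall t, continuous (fun t => g * g * fE g t) t).
Proof.
unfold fE; split; [|split]; intros t.
- auto_derive; auto; ring.
- auto_derive; auto; ring.
- apply cont_der; auto_derive; auto.
Qed.

Lemma alg_gB1 : forall T g x0 x1 E : R, T <> 0 ->
  T ^ 3 * (1 * / T * x1) * E + T ^ 3 * x0 * (- (g * 1) * E) = T ^ 3 * (x1 / T - g * x0) * E.
Proof. intros. field. auto. Qed.

Lemma gB_der T g (X0 X1 X2 : R -> R) : T <> 0 -> (forall s, is_derive X0 s (X1 s)) -> (forall s, is_derive X1 s (X2 s)) ->
  (forall s, ex_derive X2 s) ->
  (forall t, is_derive (gB T g X0) t (gB1 T g X0 X1 t)) /\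
  (forall t, is_derive (gB1 T g X0 X1) t (gB2 T g X0 X1 X2 t)) /\ (forall t, continuous (gB2 T g X0 X1 X2) t).
Proof.
intros hT H0 H1 H2. unfold gB, gB1, gB2. split; [|split]; intros t.
- auto_derive. repeat split; auto; eexists; eauto.
  rewrite (is_derive_unique _ _ _ (H0 _)). unfold Rdiv.
  set (x0 := X0 (t * / T)). set (x1 := X1 (t * / T)). set (E := exp (- (g * t))).
  apply alg_gB1; auto.
- auto_derive. repeat split; auto; eexists; eauto.
  rewrite (is_derive_unique _ _ _ (H0 _)), (is_derive_unique _ _ _ (H1 _)). unfold Rdiv.
  set (x0 := X0 (t * / T)). set (x1 := X1 (t * / T)). set (x2 := X2 (t * / T)). set (E := exp (- (g * t))).
  clearbody x0 x1 x2 E. revert x0 x1 x2 E. clear -hT. intros. field. auto.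
- apply cont_der. auto_derive. repeat split; auto; eexists; eauto.
Qed.

Lemma absT3 c Y E : 0 <= c -> 0 < E -> Rabs (c * Y * E) = c * Rabs Y * E.
Proof. intros. rewrite !Rabs_mult, (Rabs_pos_eq c), (Rabs_pos_eq E); lra. Qed.

Lemma gB_bnd T g k (X0 X1 X2 : R -> R) t : 0 < T <= 1 -> 1 <= k -> 0 <= g <= 4 * k ->
  Rabs (X0 (t / T)) <= 210 -> Rabs (X1 (t / T)) <= 1120 -> Rabs (X2 (t / T)) <= 5040 ->
  Rabs (gB T g X0 t) <= 100000 * T^3 * exp (- (g * t)) /\
  Rabs (gB1 T g X0 X1 t) <= 100000 * k * T^2 * exp (- (g * t)) /\
  Rabs (gB2 T g X0 X1 X2 t) <= 100000 * (k * k) * T * exp (- (g * t)).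
Proof.
intros hT hk hg h0 h1 h2. unfold gB, gB1, gB2.
set (E := exp (- (g * t))). assert (hE : 0 < E) by apply exp_pos.
set (x0 := X0 (t / T)) in *. set (x1 := X1 (t / T)) in *. set (x2 := X2 (t / T)) in *.
assert (hT3 : 0 < T^3) by (apply pow_lt; lra).
assert (hT2 : 0 < T^2) by (apply pow_lt; lra).
assert (hgT : 0 <= g * T <= 4 * k) by nra.
split; [|split].
- rewrite absT3 by lra. apply Rmult_le_compat_r; [lra|]. nra.
- replace (T ^ 3 * (x1 / T - g * x0) * E) with (T^2 * (x1 - (g * T) * x0) * E) by (field; lra).
  rewrite absT3 by lra. apply Rmult_le_compat_r; [lra|].
  assert (A : Rabs ((g * T) * x0) <= 4 * k * 210) by (apply absmul; auto; rewrite Rabs_pos_eq; lra).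
  assert (Rabs (x1 - (g * T) * x0) <= 1120 + 4 * k * 210).
  { eapply Rle_trans; [apply Rabs_triang|]. rewrite Rabs_Ropp. lra. }
  pose proof (Rabs_pos (x1 - g * T * x0)). nra.
- replace (T ^ 3 * (x2 / (T * T) - 2 * g * x1 / T + g * g * x0) * E) with
    (T * (x2 - 2 * (g * T) * x1 + ((g * T) * (g * T)) * x0) * E) by (field; lra).
  rewrite absT3 by lra. apply Rmult_le_compat_r; [lra|].
  assert (A : Rabs ((2 * (g * T)) * x1) <= 8 * k * 1120) by (apply absmul; auto; rewrite Rabs_pos_eq; lra).
  assert (B : Rabs (((g * T) * (g * T)) * x0) <= (16 * (k * k)) * 210).
  { apply absmul; auto; rewrite Rabs_pos_eq; nra. }
  assert (Rabs (x2 - 2 * (g * T) * x1 + ((g * T) * (g * T)) * x0) <= 5040 + 8 * k * 1120 + 16 * (k * k) * 210).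
  { eapply Rle_trans; [apply Rabs_triang|]. eapply Rle_trans; [apply Rplus_le_compat_r; apply Rabs_triang|].
    rewrite Rabs_Ropp. replace (2 * (g * T) * x1) with ((2 * (g * T)) * x1) by ring. lra. }
  assert (k <= k * k) by nra.
  assert (Rabs (x2 - 2 * (g * T) * x1 + ((g * T) * (g * T)) * x0) <= 100000 * (k * k)) by lra.
  replace (100000 * (k * k) * T) with (T * (100000 * (k * k))) by ring.
  apply Rmult_le_compat_l; lra.
Qed.

Lemma fE_bnd g k t : 0 <= g <= 4 * k -> 1 <= k ->
  Rabs (fE g t) <= 100000 * exp (- (g * t)) /\ Rabs (- g * fE g t) <= 100000 * k * exp (- (g * t)) /\
  Rabs (g * g * fE g t) <= 100000 * (k * k) * exp (- (g * t)).
Proof.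
intros hg hk. unfold fE. set (E := exp (- (g * t))). assert (hE : 0 < E) by apply exp_pos.
rewrite !Rabs_mult, (Rabs_pos_eq E) by lra. rewrite Rabs_Ropp, (Rabs_pos_eq g) by lra.
assert (g * g <= 16 * (k * k)) by (replace (16 * (k * k)) with ((4 * k) * (4 * k)) by ring; apply Rmult_le_compat; lra).
assert (0 <= k * k) by (apply Rmult_le_pos; lra).
split; [lra|split]; apply Rmult_le_compat_r; lra.
Qed.

Lemma exp81 x : x <= 4 -> 0 < exp x <= 81.
Proof.
intros h. split. apply exp_pos.
assert (exp x <= exp 4). { destruct (Req_dec x 4). subst; lra. left; apply exp_increasing; lra. }
assert (exp 4 = exp 1 * exp 1 * exp 1 * exp 1) by (rewrite <- !exp_plus; f_equal; ring).
pose proof exp_le_3. pose proof (exp_pos 1).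
assert (exp 1 * exp 1 <= 9) by nra. assert (exp 1 * exp 1 * exp 1 <= 27) by nra. nra.
Qed.

Lemma sqrt4 a : 1/10 < a < 10 -> 0 <= sqrt a <= 4 /\ sqrt a * sqrt a = a.
Proof.
intros h. assert (E : sqrt a * sqrt a = a) by (apply sqrt_sqrt; lra).
pose proof (sqrt_pos a). split; auto. split; auto. nra.
Qed.

Lemma exp_shift al be t : exp (- (be * t)) = exp (- (al * t)) * exp ((al - be) * t).
Proof. rewrite <- exp_plus. f_equal. ring. Qed.

Lemma dscal (h : R -> R) K t l : is_derive h t l -> is_derive (fun t => K * h t) t (K * l).
Proof. intros H. apply is_derive_Reals. apply (derivable_pt_lim_scal h K t l). apply is_derive_Reals; auto. Qed.
Lemma dzero t : is_derive (fun _ : R => 0) t ((fun _ : R => 0) t).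
Proof. auto_derive; auto; ring. Qed.

Lemma zz K e q g T : K*e*(0/(T*T) - 2*g*0/T) = 0 /\ K*e*(q*(0/(T*T) - 2*g*0/T) + 0/(T*T*T) - 2*g*0/(T*T)) = 0.
Proof. unfold Rdiv. split; ring. Qed.

Lemma divT t T : 0 < T -> (t <= 0 -> t / T <= 0) /\ (T <= t -> 1 <= t / T) /\ (0 <= t <= T -> 0 <= t / T <= 1).
Proof.
intros hT. assert (E : t = (t / T) * T) by (field; lra). set (s := t / T) in *.
rewrite E. split; [|split]; intros; nra.
Qed.

Lemma case1 a b T (k k' : nat) :
  1/10 < a < 10 -> 1/10 < b < 10 -> 0 < T -> 10^13 * T <= 1 ->
  1 <= INR k -> INR k <= INR k' -> INR k' <= 2 * INR k -> INR k' * T <= 1 -> 10^7 <= INR k * INR k' ->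
  exists (u A11 A12 A21 A22 : R -> R -> R -> R) (f g : R -> R),
     admissible u A11 A12 A21 A22 /\
     (forall x y t, t <= 0 -> u x y t = u1 a k x y t /\ is_diag_ab a b A11 A12 A21 A22 x y t) /\
     (forall x y t, T <= t -> u x y t = u1 a k x y t + T^3 * u2 b k' x y t /\
        is_diag_ab a b A11 A12 A21 A22 x y t) /\
     C2_1 f /\ C2_1 g /\
     (forall x y t, 0 <= t <= T -> u x y t = f t * cos (INR k * x) + g t * cos (INR k' * y)) /\
     (forall t, 0 <= t <= T ->
        (Rabs (Derive_n f 0 t) <= 100000 * exp (- (INR k * sqrt a * t)) /\
         Rabs (Derive_n f 1 t) <= 100000 * INR k * exp (- (INR k * sqrt a * t)) /\
         Rabs (Derive_n f 2 t) <= 100000 * (INR k * INR k) * exp (- (INR k * sqrt a * t))) /\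
        (Rabs (Derive_n g 0 t) <= 100000 * T^3 * exp (- (INR k' * sqrt b * t)) /\
         Rabs (Derive_n g 1 t) <= 100000 * INR k' * T^2 * exp (- (INR k' * sqrt b * t)) /\
         Rabs (Derive_n g 2 t) <= 100000 * (INR k' * INR k') * T * exp (- (INR k' * sqrt b * t)))).
Proof.
intros Ha Hb HT HT13 Hk1 Hkk Hk2 HkT Hkk7.
set (kr := INR k) in *. set (ks := INR k') in *.
destruct (sqrt4 a Ha) as [Sa Ea]. destruct (sqrt4 b Hb) as [Sb Eb].
set (sa := sqrt a) in *. set (sb := sqrt b) in *.
set (al := kr * sa). set (be := ks * sb).
assert (Hal : 0 <= al <= 4 * kr) by (unfold al; nra).
assert (Hbe : 0 <= be <= 4 * ks) by (unfold be; nra).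
set (K := 2 * T^3 / (kr * ks)).
set (cc := ccf K (al - be) be T chi1 chi2).
set (dc := dccf K (al - be) be T chi1 chi2 chi3).
assert (Hcc : forall t, is_derive cc t (dc t)) by (apply ccf_der; [lra|apply chi1_der|apply chi2_der]).
assert (Hdc : forall t, continuous dc t).
{ apply dccf_cont; intro s. apply cont_der; exists (chi2 s); apply chi1_der.
  apply cont_der; exists (chi3 s); apply chi2_der. apply chi3_cont. }
destruct (fE_der al) as [F1 [F2 F3]].
destruct (gB_der T be chi0 chi1 chi2) as [G1 [G2 G3]]; try lra.
apply chi0_der. apply chi1_der. intro s; exists (chi3 s); apply chi2_der.
assert (Zero : forall t, t <= 0 \/ T <= t -> cc t = 0 /\ dc t = 0).
{ intros t Ht. destruct (divT t T HT) as [D1 [D2 _]].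
  assert (Z : chi1 (t / T) = 0 /\ chi2 (t / T) = 0 /\ chi3 (t / T) = 0).
  { destruct Ht as [Ht|Ht]; [specialize (D1 Ht)|specialize (D2 Ht)];
    repeat split; first [ apply (proj1 (chi1_out _)); assumption | apply (proj2 (chi1_out _)); assumption
     | apply (proj1 (chi2_out _)); assumption | apply (proj2 (chi2_out _)); assumption
     | apply (proj1 (chi3_out _)); assumption | apply (proj2 (chi3_out _)); assumption ]. }
  destruct Z as [Z1 [Z2 Z3]]. unfold cc, dc, ccf, dccf. rewrite Z1, Z2, Z3. apply zz. }
assert (Bnd : forall t, ks * Rabs (cc t) <= 1/100 /\ Rabs (dc t) <= 10).
{ intros t. destruct (Rle_dec t 0) as [h|h]. destruct (Zero t (or_introl h)) as [-> ->].
  rewrite Rabs_R0; lra.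
  destruct (Rle_dec T t) as [h'|h']. destruct (Zero t (or_intror h')) as [-> ->].
  rewrite Rabs_R0; lra.
  assert (He : 0 < exp ((al - be) * t) <= 81) by (apply exp81; nra).
  split.
  - unfold cc, ccf, K. apply NumC; auto; try lra. apply chi1_b. apply chi2_b.
  - unfold dc, dccf, K. apply NumD; auto; try lra.
    + nra.
    + rewrite Rabs_le_between. nra.
    + apply chi1_b.
    + apply chi2_b.
    + apply chi3_b. }
assert (Kp : 0 <= ks / (2 * kr) <= 1).
{ split. apply Rmult_le_pos; [lra|left; apply Rinv_0_lt_compat; lra].
  apply Rmult_le_reg_r with (2 * kr); [lra|]. unfold Rdiv. rewrite Rmult_assoc, Rinv_l by lra. lra. }
destruct (DerN (fE al) (fun t => - al * fE al t) (fun t => al * al * fE al t) F1 F2 F3) as [Cf Df].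
destruct (DerN (gB T be chi0) (gB1 T be chi0 chi1) (gB2 T be chi0 chi1 chi2) G1 G2 G3) as [Cg Dg].
exists (Ugen k k' (fE al) (gB T be chi0)), (Acc a k k' (fun t => ks / (2 * kr) * cc t)),
  (Ass k k' (fun _ => 0)), (Ass k k' cc), (Acc b k k' (fun _ => 0)), (fE al), (gB T be chi0).
split; [|split; [|split; [|split; [|split; [|split]]]]].
- apply (gen_adm k k' a b (fE al) (fun t => - al * fE al t) (fun t => al * al * fE al t)
    (gB T be chi0) (gB1 T be chi0 chi1) (gB2 T be chi0 chi1 chi2)
    (fun t => ks / (2 * kr) * cc t) (fun _ => 0) cc (fun _ => 0)
    (fun t => ks / (2 * kr) * dc t) (fun _ => 0) dc (fun _ => 0)); auto.
  + intro; apply dscal; auto.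
  + intro; apply cmul; [apply cconst|auto].
  + intro; apply dzero.
  + intro; apply cconst.
  + intro; apply dzero.
  + intro; apply cconst.
  + intro t; destruct (Bnd t) as [B1 B2]. cbv beta. change (INR k') with ks. rewrite ?Rabs_R0.
    rewrite Rabs_mult, (Rabs_pos_eq (ks / (2 * kr))) by lra.
    pose proof (Rabs_pos (cc t)).
    assert (ks * (ks / (2 * kr) * Rabs (cc t)) <= 1/100).
    { replace (ks * (ks / (2 * kr) * Rabs (cc t))) with ((ks / (2 * kr)) * (ks * Rabs (cc t))) by ring.
      assert (0 <= ks * Rabs (cc t)) by nra. nra. }
    repeat split; lra.
  + intro t; destruct (Bnd t) as [B1 B2]. cbv beta. change (INR k') with ks. rewrite ?Rabs_R0.
    rewrite Rabs_mult, (Rabs_pos_eq (ks / (2 * kr))) by lra.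
    pose proof (Rabs_pos (dc t)). assert (ks / (2 * kr) * Rabs (dc t) <= 10) by nra. repeat split; lra.
  + intros x y t. unfold Xexpr, Yexpr. change (INR k) with kr. change (INR k') with ks.
    unfold gB2, gB, cc, ccf, fE. rewrite (exp_shift al be t).
    set (F := exp (- (al * t))). set (e := exp ((al - be) * t)).
    set (x0 := chi0 (t / T)). set (x1 := chi1 (t / T)). set (x2 := chi2 (t / T)).
    set (Cx := cos (kr * x)). set (Sx := sin (kr * x)). set (Cy := cos (ks * y)). set (Sy := sin (ks * y)).
    assert (Hx : Sx * Sx + Cx * Cx = 1) by (unfold Sx, Cx; pose proof (sin2_cos2 (kr * x)); unfold Rsqr in *; lra).
    unfold K, al, be. rewrite <- Ea, <- Eb.
    clearbody F e x0 x1 x2 Cx Sx Cy Sy.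
    transitivity ((Sx * Sx + Cx * Cx - 1) * (- (T^3 * F * e * (x2 / (T * T) - 2 * (ks * sb) * x1 / T)) * Cy)).
    * field. lra.
    * rewrite Hx. ring.
- intros x y t Ht. destruct (Zero t (or_introl Ht)) as [Z _].
  assert (X0 : chi0 (t / T) = 0) by (apply (proj1 (chi0_out _)); apply (proj1 (divT t T HT)); auto).
  unfold Ugen, gB, fE, u1, is_diag_ab, Acc, Ass. rewrite Z, X0. unfold al, kr, sa.
  split; [ring|repeat split; ring].
- intros x y t Ht. destruct (Zero t (or_intror Ht)) as [Z _].
  assert (X0 : chi0 (t / T) = 1) by (apply (proj2 (chi0_out _)); apply (proj1 (proj2 (divT t T HT))); auto).
  unfold Ugen, gB, fE, u1, u2, is_diag_ab, Acc, Ass. rewrite Z, X0. unfold al, be, kr, ks, sa, sb.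
  split; [ring|repeat split; ring].
- exact Cf.
- exact Cg.
- intros; reflexivity.
- intros t Ht. destruct (Df t) as [f0 [f1 f2]]. destruct (Dg t) as [g0 [g1 g2]].
  rewrite f0, f1, f2, g0, g1, g2.
  destruct (fE_bnd al kr t Hal Hk1) as [b0 [b1 b2]].
  assert (HT1 : 0 < T <= 1) by (simpl in HT13; lra).
  assert (Hks : 1 <= ks) by lra.
  pose proof (chi0_b (t / T)).
  destruct (gB_bnd T be ks chi0 chi1 chi2 t HT1 Hks Hbe ltac:(lra) (chi1_b _) (chi2_b _)) as [c0 [c1 c2]].
  unfold al, be, kr, ks, sa, sb in *. repeat split; assumption.
Qed.
Definition nX0 s := 1 - chi0 s.
Definition nX1 s := - chi1 s.
Definition nX2 s := - chi2 s.
Definition nX3 s := - chi3 s.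
Lemma nX0_der s : is_derive nX0 s (nX1 s).
Proof. unfold nX0, nX1. auto_derive. exists (chi1 s); apply chi0_der. replace (Derive (fun x => chi0 x) s) with (chi1 s) by (symmetry; apply is_derive_unique; apply chi0_der). ring. Qed.
Lemma nX1_der s : is_derive nX1 s (nX2 s).
Proof. unfold nX1, nX2. auto_derive. exists (chi2 s); apply chi1_der. replace (Derive (fun x => chi1 x) s) with (chi2 s) by (symmetry; apply is_derive_unique; apply chi1_der). ring. Qed.
Lemma nX2_der s : is_derive nX2 s (nX3 s).
Proof. unfold nX2, nX3. auto_derive. exists (chi3 s); apply chi2_der. replace (Derive (fun x => chi2 x) s) with (chi3 s) by (symmetry; apply is_derive_unique; apply chi2_der). ring. Qed.
Lemma nX3_cont s : continuous nX3 s.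
Proof. unfold nX3. apply (copp chi3). apply chi3_cont. Qed.

Lemma case2 a b T (k k' : nat) :
  1/10 < a < 10 -> 1/10 < b < 10 -> 0 < T -> 10^13 * T <= 1 ->
  1 <= INR k -> INR k <= INR k' -> INR k' <= 2 * INR k -> INR k' * T <= 1 -> 10^7 <= INR k * INR k' ->
  exists (u A11 A12 A21 A22 : R -> R -> R -> R) (f g : R -> R),
     admissible u A11 A12 A21 A22 /\
     (forall x y t, t <= 0 -> u x y t = T^3 * u1 a k x y t + u2 b k' x y t /\ is_diag_ab a b A11 A12 A21 A22 x y t) /\
     (forall x y t, T <= t -> u x y t = u2 b k' x y t /\ is_diag_ab a b A11 A12 A21 A22 x y t) /\
     C2_1 f /\ C2_1 g /\
     (forall x y t, 0 <= t <= T -> u x y t = f t * cos (INR k * x) + g t * cos (INR k' * y)) /\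
     (forall t, 0 <= t <= T ->
        (Rabs (Derive_n f 0 t) <= 100000 * T^3 * exp (- (INR k * sqrt a * t)) /\
         Rabs (Derive_n f 1 t) <= 100000 * INR k * T^2 * exp (- (INR k * sqrt a * t)) /\
         Rabs (Derive_n f 2 t) <= 100000 * (INR k * INR k) * T * exp (- (INR k * sqrt a * t))) /\
        (Rabs (Derive_n g 0 t) <= 100000 * exp (- (INR k' * sqrt b * t)) /\
         Rabs (Derive_n g 1 t) <= 100000 * INR k' * exp (- (INR k' * sqrt b * t)) /\
         Rabs (Derive_n g 2 t) <= 100000 * (INR k' * INR k') * exp (- (INR k' * sqrt b * t)))).
Proof.
intros Ha Hb HT HT13 Hk1 Hkk Hk2 HkT Hkk7.
set (kr := INR k) in *. set (ks := INR k') in *.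
destruct (sqrt4 a Ha) as [Sa Ea]. destruct (sqrt4 b Hb) as [Sb Eb].
set (sa := sqrt a) in *. set (sb := sqrt b) in *.
set (al := kr * sa). set (be := ks * sb).
assert (Hal : 0 <= al <= 4 * kr) by (unfold al; nra).
assert (Hbe : 0 <= be <= 4 * ks) by (unfold be; nra).
set (K := 2 * T^3 / (kr * ks)).
set (cc := ccf K (be - al) al T nX1 nX2).
set (dc := dccf K (be - al) al T nX1 nX2 nX3).
assert (Hcc : forall t, is_derive cc t (dc t)) by (apply ccf_der; [lra|apply nX1_der|apply nX2_der]).
assert (Hdc : forall t, continuous dc t).
{ apply dccf_cont; intro s. apply cont_der; exists (nX2 s); apply nX1_der.
  apply cont_der; exists (nX3 s); apply nX2_der. apply nX3_cont. }
destruct (fE_der be) as [F1 [F2 F3]].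
destruct (gB_der T al nX0 nX1 nX2) as [G1 [G2 G3]]; try lra.
apply nX0_der. apply nX1_der. intro s; exists (nX3 s); apply nX2_der.
assert (Zero : forall t, t <= 0 \/ T <= t -> cc t = 0 /\ dc t = 0).
{ intros t Ht. destruct (divT t T HT) as [D1 [D2 _]].
  assert (Z : chi1 (t / T) = 0 /\ chi2 (t / T) = 0 /\ chi3 (t / T) = 0).
  { destruct Ht as [Ht|Ht]; [specialize (D1 Ht)|specialize (D2 Ht)];
    repeat split; first [ apply (proj1 (chi1_out _)); assumption | apply (proj2 (chi1_out _)); assumption
     | apply (proj1 (chi2_out _)); assumption | apply (proj2 (chi2_out _)); assumption
     | apply (proj1 (chi3_out _)); assumption | apply (proj2 (chi3_out _)); assumption ]. }
  destruct Z as [Z1 [Z2 Z3]]. unfold cc, dc, ccf, dccf, nX1, nX2, nX3. rewrite Z1, Z2, Z3, Ropp_0. apply zz. }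
assert (NB : forall s, Rabs (nX1 s) <= 1120 /\ Rabs (nX2 s) <= 5040 /\ Rabs (nX3 s) <= 18480 /\ Rabs (nX0 s) <= 210).
{ intros s. unfold nX1, nX2, nX3, nX0. rewrite !Rabs_Ropp. pose proof (chi0_b s).
  split; [apply chi1_b|split; [apply chi2_b|split; [apply chi3_b|]]].
  unfold Rminus. eapply Rle_trans; [apply Rabs_triang|]. rewrite Rabs_R1, Rabs_Ropp. lra. }
assert (Bnd : forall t, ks * Rabs (cc t) <= 1/100 /\ Rabs (dc t) <= 10).
{ intros t. destruct (Rle_dec t 0) as [h|h]. destruct (Zero t (or_introl h)) as [-> ->].
  rewrite Rabs_R0; lra.
  destruct (Rle_dec T t) as [h'|h']. destruct (Zero t (or_intror h')) as [-> ->].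
  rewrite Rabs_R0; lra.
  assert (He : 0 < exp ((be - al) * t) <= 81) by (apply exp81; nra).
  destruct (NB (t / T)) as [N1 [N2 [N3 _]]].
  split.
  - unfold cc, ccf, K. apply NumC; auto; lra.
  - unfold dc, dccf, K. apply NumD; auto; try lra.
    + nra.
    + rewrite Rabs_le_between. nra. }
assert (Kp : 0 <= kr / (2 * ks) <= 1).
{ split. apply Rmult_le_pos; [lra|left; apply Rinv_0_lt_compat; lra].
  apply Rmult_le_reg_r with (2 * ks); [lra|]. unfold Rdiv. rewrite Rmult_assoc, Rinv_l by lra. lra. }
destruct (DerN (fE be) (fun t => - be * fE be t) (fun t => be * be * fE be t) F1 F2 F3) as [Cg Dg].
destruct (DerN (gB T al nX0) (gB1 T al nX0 nX1) (gB2 T al nX0 nX1 nX2) G1 G2 G3) as [Cf Df].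
exists (Ugen k k' (gB T al nX0) (fE be)), (Acc a k k' (fun _ => 0)),
  (Ass k k' cc), (Ass k k' (fun _ => 0)), (Acc b k k' (fun t => kr / (2 * ks) * cc t)), (gB T al nX0), (fE be).
split; [|split; [|split; [|split; [|split; [|split]]]]].
- apply (gen_adm k k' a b (gB T al nX0) (gB1 T al nX0 nX1) (gB2 T al nX0 nX1 nX2)
    (fE be) (fun t => - be * fE be t) (fun t => be * be * fE be t)
    (fun _ => 0) cc (fun _ => 0) (fun t => kr / (2 * ks) * cc t)
    (fun _ => 0) dc (fun _ => 0) (fun t => kr / (2 * ks) * dc t)); auto.
  + intro; apply dzero.
  + intro; apply cconst.
  + intro; apply dzero.
  + intro; apply cconst.
  + intro; apply dscal; auto.
  + intro; apply cmul; [apply cconst|auto].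
  + intro t; destruct (Bnd t) as [B1 B2]. cbv beta. change (INR k') with ks. rewrite ?Rabs_R0.
    rewrite Rabs_mult, (Rabs_pos_eq (kr / (2 * ks))) by lra.
    pose proof (Rabs_pos (cc t)).
    assert (ks * (kr / (2 * ks) * Rabs (cc t)) <= 1/100).
    { replace (ks * (kr / (2 * ks) * Rabs (cc t))) with ((kr / (2 * ks)) * (ks * Rabs (cc t))) by ring.
      assert (0 <= ks * Rabs (cc t)) by nra. nra. }
    repeat split; lra.
  + intro t; destruct (Bnd t) as [B1 B2]. cbv beta. change (INR k') with ks. rewrite ?Rabs_R0.
    rewrite Rabs_mult, (Rabs_pos_eq (kr / (2 * ks))) by lra.
    pose proof (Rabs_pos (dc t)). assert (kr / (2 * ks) * Rabs (dc t) <= 10) by nra. repeat split; lra.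
  + intros x y t. unfold Xexpr, Yexpr. change (INR k) with kr. change (INR k') with ks.
    unfold gB2, gB, cc, ccf, fE, nX0, nX1, nX2. rewrite (exp_shift be al t).
    set (F := exp (- (be * t))). set (e := exp ((be - al) * t)).
    set (x0 := chi0 (t / T)). set (x1 := chi1 (t / T)). set (x2 := chi2 (t / T)).
    set (Cx := cos (kr * x)). set (Sx := sin (kr * x)). set (Cy := cos (ks * y)). set (Sy := sin (ks * y)).
    assert (Hy : Sy * Sy + Cy * Cy = 1) by (unfold Sy, Cy; pose proof (sin2_cos2 (ks * y)); unfold Rsqr in *; lra).
    unfold K, al, be. rewrite <- Ea, <- Eb.
    clearbody F e x0 x1 x2 Cx Sx Cy Sy.
    transitivity ((Sy * Sy + Cy * Cy - 1) * (- (T^3 * F * e * ((- x2) / (T * T) - 2 * (kr * sa) * (- x1) / T)) * Cx)).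
    * field. lra.
    * rewrite Hy. ring.
- intros x y t Ht. destruct (Zero t (or_introl Ht)) as [Z _].
  assert (X0 : chi0 (t / T) = 0) by (apply (proj1 (chi0_out _)); apply (proj1 (divT t T HT)); auto).
  unfold Ugen, gB, fE, u1, u2, is_diag_ab, Acc, Ass, nX0. rewrite Z, X0. unfold al, be, kr, ks, sa, sb.
  split; [ring|repeat split; ring].
- intros x y t Ht. destruct (Zero t (or_intror Ht)) as [Z _].
  assert (X0 : chi0 (t / T) = 1) by (apply (proj2 (chi0_out _)); apply (proj1 (proj2 (divT t T HT))); auto).
  unfold Ugen, gB, fE, u1, u2, is_diag_ab, Acc, Ass, nX0. rewrite Z, X0. unfold al, be, kr, ks, sa, sb.
  split; [ring|repeat split; ring].
- exact Cf.
- exact Cg.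
- intros; reflexivity.
- intros t Ht. destruct (Df t) as [f0 [f1 f2]]. destruct (Dg t) as [g0 [g1 g2]].
  rewrite f0, f1, f2, g0, g1, g2.
  destruct (fE_bnd be ks t Hbe ltac:(lra)) as [b0 [b1 b2]].
  assert (HT1 : 0 < T <= 1) by (simpl in HT13; lra).
  destruct (NB (t / T)) as [N1 [N2 [N3 N0]]].
  destruct (gB_bnd T al kr nX0 nX1 nX2 t HT1 Hk1 Hal N0 N1 N2) as [c0 [c1 c2]].
  unfold al, be, kr, ks, sa, sb in *. repeat split; assumption.
Qed.

Lemma Rp_pow eps r n : 0 < eps -> Rpower eps (r * INR n) = (Rpower eps r) ^ n.
Proof. intros h. rewrite <- Rpower_mult. apply Rpower_pow. unfold Rpower. apply exp_pos. Qed.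

Lemma Rp_facts eps : 0 < eps < / 10^40 ->
  let T := Rpower eps (1/3) in let S := Rpower eps (1/4) in
  0 < T /\ T^3 = eps /\ 10^13 * T <= 1 /\ 0 < S /\ 10^10 * S <= 1 /\
  Rpower eps (-(1/3)) = / T /\ Rpower eps (-(1/4)) = / S /\
  Rpower eps ((3 - INR 0) / 3) = T^3 /\ Rpower eps ((3 - INR 1) / 3) = T^2 /\ Rpower eps ((3 - INR 2) / 3) = T.
Proof.
intros h T S.
assert (hT : 0 < T) by (unfold T, Rpower; apply exp_pos).
assert (hS : 0 < S) by (unfold S, Rpower; apply exp_pos).
assert (T3 : T^3 = eps).
{ unfold T. rewrite <- Rp_pow by lra. replace (1/3 * INR 3) with (INR 1) by (simpl; lra).
  rewrite Rpower_pow by lra. ring. }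
assert (S4 : S^4 = eps).
{ unfold S. rewrite <- Rp_pow by lra. replace (1/4 * INR 4) with (INR 1) by (simpl; lra).
  rewrite Rpower_pow by lra. ring. }
assert (h40 : 10^40 * eps < 1).
{ destruct h as [h1 h2]. apply Rmult_lt_compat_l with (r := 10^40) in h2; [|apply pow_lt; lra].
  rewrite Rinv_r in h2; [lra|]. apply pow_nonzero; lra. }
split; [auto|split; [auto|split]].
{ destruct (Rle_dec (10^13 * T) 1) as [ok|no]; auto. exfalso.
  assert (1 < (10^13 * T)^3) by (apply Rlt_pow_R1; [lra|auto]).
  rewrite Rpow_mult_distr, T3 in H. simpl in H, h40. lra. }
split; [auto|split].
{ destruct (Rle_dec (10^10 * S) 1) as [ok|no]; auto. exfalso.
  assert (1 < (10^10 * S)^4) by (apply Rlt_pow_R1; [lra|auto]).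
  rewrite Rpow_mult_distr, S4 in H. simpl in H, h40. lra. }
split; [unfold T; apply Rpower_Ropp|split; [unfold S; apply Rpower_Ropp|]].
split; [|split].
- replace ((3 - INR 0) / 3) with (1/3 * INR 3) by (simpl; lra). rewrite Rp_pow by lra. reflexivity.
- replace ((3 - INR 1) / 3) with (1/3 * INR 2) by (simpl; lra). rewrite Rp_pow by lra. reflexivity.
- replace ((3 - INR 2) / 3) with (1/3 * INR 1) by (simpl; lra). rewrite Rp_pow by lra. unfold T; ring.
Qed.

Theorem mainTheorem13 :
  exists D M : R, 0 < D /\
  forall a b : R, 1/10 < a < 10 -> 1/10 < b < 10 ->
  forall eps : R, 0 < eps < D ->
  forall k k' : nat, (1 <= k)%nat -> (k <= k')%nat -> (k' <= 2 * k)%nat ->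
    Rpower eps (-(1/4)) <= INR k <= Rpower eps (-(1/3)) ->
    Rpower eps (-(1/4)) <= INR k' <= Rpower eps (-(1/3)) ->
  (* (i) *)
  (exists (u A11 A12 A21 A22 : R -> R -> R -> R) (f g : R -> R),
     admissible u A11 A12 A21 A22 /\
     (forall x y t, t <= 0 ->
        u x y t = u1 a k x y t /\ is_diag_ab a b A11 A12 A21 A22 x y t) /\
     (forall x y t, Rpower eps (1/3) <= t ->
        u x y t = u1 a k x y t + eps * u2 b k' x y t /\
        is_diag_ab a b A11 A12 A21 A22 x y t) /\
     C2_1 f /\ C2_1 g /\
     (forall x y t, 0 <= t <= Rpower eps (1/3) ->
        u x y t = f t * cos (INR k * x) + g t * cos (INR k' * y)) /\
     (forall (al : nat) t, (al <= 2)%nat -> 0 <= t <= Rpower eps (1/3) ->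
        Rabs (Derive_n f al t) <= M * INR k ^ al * exp (- (INR k * sqrt a * t)) /\
        Rabs (Derive_n g al t) <=
          M * INR k' ^ al * Rpower eps ((3 - INR al) / 3)
            * exp (- (INR k' * sqrt b * t)))) /\
  (* (ii) *)
  (exists (u A11 A12 A21 A22 : R -> R -> R -> R) (f g : R -> R),
     admissible u A11 A12 A21 A22 /\
     (forall x y t, t <= 0 ->
        u x y t = eps * u1 a k x y t + u2 b k' x y t /\
        is_diag_ab a b A11 A12 A21 A22 x y t) /\
     (forall x y t, Rpower eps (1/3) <= t ->
        u x y t = u2 b k' x y t /\ is_diag_ab a b A11 A12 A21 A22 x y t) /\
     C2_1 f /\ C2_1 g /\
     (forall x y t, 0 <= t <= Rpower eps (1/3) ->
        u x y t = f t * cos (INR k * x) + g t * cos (INR k' * y)) /\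
     (forall (al : nat) t, (al <= 2)%nat -> 0 <= t <= Rpower eps (1/3) ->
        Rabs (Derive_n f al t) <=
          M * INR k ^ al * Rpower eps ((3 - INR al) / 3)
            * exp (- (INR k * sqrt a * t)) /\
        Rabs (Derive_n g al t) <= M * INR k' ^ al * exp (- (INR k' * sqrt b * t)))).
Proof.
exists (/ 10^40), 100000. split.
{ apply Rinv_0_lt_compat. apply pow_lt. lra. }
intros a b Ha Hb eps Heps k k' hk1 hkk hk2 Hk Hk'.
destruct (Rp_facts eps Heps) as [HT [T3 [T13 [HS [S10 [RT [RS [R0 [R1 R2]]]]]]]]].
set (T := Rpower eps (1/3)) in *. set (S := Rpower eps (1/4)) in *.
rewrite RT, RS in Hk, Hk'.
assert (K1 : 1 <= INR k) by (apply le_INR in hk1; simpl in hk1; lra).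
assert (K2 : INR k <= INR k') by (apply le_INR; auto).
assert (K3 : INR k' <= 2 * INR k) by (apply le_INR in hk2; rewrite mult_INR in hk2; simpl in hk2; lra).
assert (K4 : INR k' * T <= 1).
{ destruct Hk' as [_ h]. apply Rmult_le_compat_r with (r := T) in h; [|lra].
  rewrite Rinv_l in h; lra. }
assert (K5 : 10^7 <= INR k * INR k').
{ destruct Hk as [h _]. assert (1 <= INR k * S).
  { apply Rmult_le_compat_r with (r := S) in h; [|lra]. rewrite Rinv_l in h; lra. }
  assert (10^10 <= INR k).
  { apply Rmult_le_reg_r with S; auto. simpl in S10 |- *. nra. }
  simpl in *. nra. }
assert (P : forall al : nat, (al <= 2)%nat -> al = 0%nat \/ al = 1%nat \/ al = 2%nat) by (intros; lia).
split.
- destruct (case1 a b T k k' Ha Hb HT T13 K1 K2 K3 K4 K5) as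
    [u [A11 [A12 [A21 [A22 [f [g [P1 [P2 [P3 [P4 [P5 [P6 P7]]]]]]]]]]]]].
  exists u, A11, A12, A21, A22, f, g. split; [auto|split; [auto|split; [|split; [auto|split; [auto|split; [auto|]]]]]].
  + intros x y t h. rewrite <- T3. auto.
  + intros al t hal ht. destruct (P7 t ht) as [[f0 [f1 f2]] [g0 [g1 g2]]].
    destruct (P al hal) as [E|[E|E]]; subst al.
    * rewrite R0. simpl pow. rewrite Rmult_1_r. split; [lra|]. rewrite Rmult_1_r. lra.
    * rewrite R1. simpl pow. rewrite !Rmult_1_r. split; lra.
    * rewrite R2. simpl pow. rewrite !Rmult_1_r. split; lra.
- destruct (case2 a b T k k' Ha Hb HT T13 K1 K2 K3 K4 K5) as
    [u [A11 [A12 [A21 [A22 [f [g [P1 [P2 [P3 [P4 [P5 [P6 P7]]]]]]]]]]]]].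
  exists u, A11, A12, A21, A22, f, g. split; [auto|split; [|split; [auto|split; [auto|split; [auto|split; [auto|]]]]]].
  + intros x y t h. rewrite <- T3. auto.
  + intros al t hal ht. destruct (P7 t ht) as [[f0 [f1 f2]] [g0 [g1 g2]]].
    destruct (P al hal) as [E|[E|E]]; subst al.
    * rewrite R0. simpl pow. rewrite !Rmult_1_r. split; lra.
    * rewrite R1. simpl pow. rewrite !Rmult_1_r. split; lra.
    * rewrite R2. simpl pow. rewrite !Rmult_1_r. split; lra.
Qed.
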